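(* Let us consider a fragment, $F$, that entered the work state for two consecutive times, $i$ and $i+1$ and remained active. Let $t_{i}$ be the time it entered the work state for the $i$-th time, and let $t_{i+1}$ be the $i+1$ time. Let us define by $k_i$ its known size at time $t_i$, and by size $k_{i+1}$ its size at time $t_{i+1}$+ countdelay. Then, $k_{i+1} \geq X^2 \cdot k_{i}$.
   Context: A broadcast network is modeled as a connected graph G(V,E) with n nodes. In the fragment-level leader election algorithm, nodes are partitioned into fragments each with a candidate; id(F) = (size, candidate identity) ordered lexicographically (by size, then identity); an external edge between F1 and F2 with id(F1) > id(F2) is outgoing for F1 and incoming for F2. Initially each node is a size-1 fragment in state wait. A fragment with an outgoing edge is in wait; a fragment in wait whose external edges are all incoming moves to work, where during a delay countdelay it counts its current size new_size, and compares with its maximal neighbor F': if new_size > X · size(F') (X > 1 a parameter) it remains active, updates its size, makes all external edges outgoing and returns to wait; otherwise it joins F'. A fragment with no external edges is the leader. It has been shown that a fragment that was in work and remained active re-enters work only after each of its neighboring fragments has been in the work state. *)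

(* Defs.v *)
(* An explicit (interleaving, discrete-time) operational model
   of the fragment-level leader election algorithm. *)
From mathcomp Require Import all_boot all_order all_algebra.
Import Order.TTheory GRing.Theory Num.Theory.
Set Implicit Arguments. Unset Strict Implicit. Unset Printing Implicit Defensive.
Local Open Scope ring_scope.

(* State of a candidate (= of the fragment it heads). [Work t0]: entered the
   work state at time t0.  [Absorbed]: the fragment joined another one. *)
Inductive status := Wait | Work of nat | Leader | Absorbed.

(* Global state: [frag v] = candidate of the fragment of node v;
   [ksz c] = known size of the fragment with candidate c; [st c] its state. *)
Record state (T : Type) := State {
  frag : T -> T;
  ksz : T -> nat;
  st : T -> status }.

Section Alg.
Variables (T : finType) (e : rel T) (uid : T -> nat) (R : realFieldType)
          (X : R) (countdelay : nat).

Definition init : state T := State id (fun _ => 1%N) (fun _ => Wait).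

Definition cand (s : state T) c := frag s c == c.
(* the nodes currently in the fragment of candidate c (actual size = #|.|) *)
Definition members (s : state T) c := [set v | frag s v == c].

Definition idlt (s : state T) c d :=
  (ksz s c < ksz s d)%N || ((ksz s c == ksz s d) && (uid c < uid d)%N).

Definition nbr (s : state T) c d :=
  (d != c) && [exists u, exists v, [&& frag s u == c, frag s v == d & e u v]].
Definition has_ext (s : state T) c := [exists d, nbr s c d].
(* all external edges of c are incoming, i.e. every neighbour has larger id *)
Definition all_incoming (s : state T) c := [forall d, nbr s c d ==> idlt s c d].
Definition is_max_nbr (s : state T) c d :=
  nbr s c d && [forall d', (nbr s c d' && (d' != d)) ==> idlt s d' d].

Definition no_deadline (s : state T) n :=
  forall c t0, cand s c -> st s c = Work t0 -> (t0 + countdelay)%N <> n.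

Definition set_st (s : state T) c x :=
  State (frag s) (ksz s) (fun y => if y == c then x else st s y).
(* remain active: update size, make all edges outgoing, return to wait *)
Definition grow (s : state T) c k :=
  State (frag s) (fun y => if y == c then k else ksz s y)
        (fun y => if y == c then Wait else st s y).
Definition absorb (s : state T) c d :=
  State (fun v => if frag s v == c then d else frag s v) (ksz s)
        (fun y => if y == c then Absorbed else st s y).

Inductive step (n : nat) (s s' : state T) : Prop :=
| StepIdle : no_deadline s n -> s' = s -> step n s s'
| StepEnter c : no_deadline s n -> cand s c -> st s c = Wait ->
    has_ext s c -> all_incoming s c -> s' = set_st s c (Work n) -> step n s s'
| StepGrow c t0 d : cand s c -> st s c = Work t0 -> (t0 + countdelay)%N = n ->
    is_max_nbr s c d ->
    X * (ksz s d)%:R < (#|members s c|)%:R ->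
    s' = grow s c #|members s c| -> step n s s'
| StepJoin c t0 d : cand s c -> st s c = Work t0 -> (t0 + countdelay)%N = n ->
    is_max_nbr s c d ->
    ~~ (X * (ksz s d)%:R < (#|members s c|)%:R) ->
    s' = absorb s c d -> step n s s'
| StepLeader c t0 : cand s c -> st s c = Work t0 -> (t0 + countdelay)%N = n ->
    ~~ has_ext s c -> s' = set_st s c Leader -> step n s s'.

Definition execution (s : nat -> state T) :=
  s 0%N = init /\ forall n, step n (s n) (s n.+1).

Definition enters_work (s : nat -> state T) c t :=
  [/\ cand (s t) c, st (s t) c = Wait & st (s t.+1) c = Work t].

(* after the work phase started at t (decision at t + countdelay), c remained
   active: it is still a candidate and back in wait *)
Definition stays_active (s : nat -> state T) c t :=
  cand (s (t + countdelay).+1) c /\ st (s (t + countdelay).+1) c = Wait.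

End Alg.

(* Main.v *)
Require Import Defs.
From mathcomp Require Import all_boot all_order all_algebra.
Import Order.TTheory GRing.Theory Num.Theory.
Set Implicit Arguments. Unset Strict Implicit. Unset Printing Implicit Defensive.
Local Open Scope ring_scope.

Section Proofs.
Variables (T : finType) (e : rel T) (uid : T -> nat) (R : realFieldType)
          (X : R) (cd : nat).
Hypothesis esym : symmetric e.

Lemma idlt_asym (s : state T) a b : idlt uid s a b -> idlt uid s b a -> False.
Proof.
rewrite /idlt => /orP[H1|/andP[/eqP E1 H1]] /orP[H2|/andP[/eqP E2 H2]].
- by move: (ltn_trans H1 H2); rewrite ltnn.
- by move: H1; rewrite E2 ltnn.
- by move: H2; rewrite E1 ltnn.
- by move: (ltn_trans H1 H2); rewrite ltnn.
Qed.

Lemma nbr_sym (s : state T) a b : nbr e s a b -> nbr e s b a.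
Proof.
rewrite /nbr => /andP[ne /existsP[u /existsP[v /and3P[hu hv huv]]]].
apply/andP; split; first by rewrite eq_sym.
by apply/existsP; exists v; apply/existsP; exists u; rewrite hu hv esym huv.
Qed.

Definition Inv (s : state T) := forall c t0, st s c = Work t0 ->
  cand s c /\ forall d, nbr e s c d -> idlt uid s c d.

Lemma inv_init : Inv (init T).
Proof. by move=> c t0. Qed.

Lemma no_adj (s : state T) c c' t t' : Inv s -> st s c = Work t ->
  st s c' = Work t' -> ~~ nbr e s c c'.
Proof.
move=> I Hc Hc'; apply/negP=> N.
have [_ H1] := I _ _ Hc; have [_ H2] := I _ _ Hc'.
exact: (idlt_asym (H1 _ N) (H2 _ (nbr_sym N))).
Qed.

Lemma inv_step n s s' : Inv s -> step e uid X cd n s s' -> Inv s'.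
Proof.
move=> I; case.
- by move=> _ ->.
- move=> c0 _ Hc0 Hw _ Hall -> c t0 /=.
  case: eqP => [-> _|ne Hst]; last exact: I Hst.
  split=> // d Hd; by move/forallP: Hall => /(_ d) /implyP /(_ Hd).
- move=> c0 t0' d Hc0 Hst0 _ Hmax _ -> c t /=.
  case: eqP => [//|ne Hst].
  have [Hcc H] := I _ _ Hst; split=> // x Hx.
  have Hx' : nbr e s c x by [].
  have Hi := H _ Hx'.
  case: (eqVneq x c0) => [Ex|nx].
    by subst x; move: (no_adj I Hst Hst0); rewrite Hx'.
  move: Hi; rewrite /idlt /=.
  have -> : (c == c0) = false by apply/eqP.
  by rewrite (negbTE nx).
- move=> c0 t0' d Hc0 Hst0 _ Hmax _ -> c t /=.
  case: eqP => [//|ne Hst].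
  have [Hcc H] := I _ _ Hst.
  have Ncc0 := no_adj I Hst Hst0.
  have Hd : nbr e s c0 d by case/andP: Hmax.
  split.
    rewrite /cand /=; move: Hcc; rewrite /cand => /eqP ->.
    by have -> : (c == c0) = false by apply/eqP.
  move=> x; rewrite /nbr /= => /andP[nxc /existsP[u /existsP[v /and3P[hu hv huv]]]].
  have Hi : idlt uid s c x; last by [].
  apply: H; apply/andP; split=> //.
  move: hu hv; case: (eqVneq (frag s u) c0) => [fu /eqP dc|fu hu].
    subst d; by move: Ncc0; rewrite (nbr_sym Hd).
  case: (eqVneq (frag s v) c0) => [fv /eqP dx|fv hv].
    move: Ncc0; rewrite /nbr.
    have -> : (c0 != c) by apply/eqP=> E; apply: ne; rewrite E.
    rewrite /= => /negP N; exfalso; apply: N; apply/existsP; exists u; apply/existsP; exists v;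
       by rewrite hu fv eqxx huv.
  by apply/existsP; exists u; apply/existsP; exists v; rewrite hu hv huv.
- move=> c0 t0' Hc0 Hst0 _ _ -> c t /=.
  case: eqP => [//|ne Hst]; exact: I Hst.
Qed.


Lemma L1 n s s' c t0 : step e uid X cd n s s' -> cand s c -> st s c = Work t0 ->
  n <> (t0 + cd)%N -> [/\ cand s' c, st s' c = Work t0 & ksz s' c = ksz s c].
Proof.
move=> S Hc Hst Hn; case: S.
- by move=> _ ->.
- move=> c0 _ _ Hw _ _ -> /=.
  case: eqP => [E|//]; by subst c0; rewrite Hst in Hw.
- move=> c0 t0' d _ Hst0 Hd _ _ -> /=.
  case: eqP => [E|//]; subst c0; rewrite Hst in Hst0; case: Hst0 => E.
  by subst t0'; case: Hn.
- move=> c0 t0' d _ Hst0 Hd _ _ -> /=.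
  case: eqP => [E|ne]; first by subst c0; rewrite Hst in Hst0; case: Hst0 => E; subst t0'; case: Hn.
  split=> //; rewrite /cand /=; move: Hc; rewrite /cand => /eqP ->.
  by have -> : (c == c0) = false by apply/eqP.
- move=> c0 t0' _ Hst0 Hd _ -> /=.
  case: eqP => [E|//]; subst c0; rewrite Hst in Hst0; case: Hst0 => E.
  by subst t0'; case: Hn.
Qed.

Lemma L3 n s s' c : step e uid X cd n s s' -> cand s c -> st s c = Wait ->
  [/\ cand s' c, st s' c = Wait \/ st s' c = Work n & ksz s' c = ksz s c].
Proof.
move=> S Hc Hst; case: S.
- by move=> _ ->; split=> //; left.
- move=> c0 _ _ Hw _ _ -> /=; split=> //.
  by case: eqP => _; [right|left].
- move=> c0 t0' d _ Hst0 Hd _ _ -> /=.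
  case: eqP => [E|_]; first by subst c0; rewrite Hst in Hst0.
  by split=> //; left.
- move=> c0 t0' d _ Hst0 Hd _ _ -> /=.
  case: eqP => [E|ne]; first by subst c0; rewrite Hst in Hst0.
  split=> //; last by left.
  rewrite /cand /=; move: Hc; rewrite /cand => /eqP ->.
  by have -> : (c == c0) = false by apply/eqP.
- move=> c0 t0' _ Hst0 Hd _ -> /=.
  case: eqP => [E|_]; first by subst c0; rewrite Hst in Hst0.
  by split=> //; left.
Qed.

Lemma L2 n s s' c t0 : step e uid X cd n s s' -> cand s c -> st s c = Work t0 ->
  (t0 + cd)%N = n -> st s' c = Wait ->
  exists d, [/\ nbr e s c d, X * (ksz s d)%:R < (#|members s c|)%:R
             & ksz s' c = #|members s c|].
Proof.
move=> S Hc Hst Hn Hw; case: S.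
- by move=> _ E; rewrite E Hst in Hw.
- by move=> c0 ND; case: (ND c t0 Hc Hst Hn).
- move=> c0 t0' d _ Hst0 _ Hmax Hlt E; rewrite E /= in Hw *.
  case: eqP Hw => [Ec _|_ Hw]; last by rewrite Hst in Hw.
  subst c0; exists d; split=> //; by case/andP: Hmax.
- move=> c0 t0' d _ Hst0 _ _ _ E; rewrite E /= in Hw.
  by case: eqP Hw => [_|_ Hw] //; rewrite Hst in Hw.
- move=> c0 t0' _ Hst0 _ _ E; rewrite E /= in Hw.
  by case: eqP Hw => [_|_ Hw] //; rewrite Hst in Hw.
Qed.


Lemma inv_all s : execution e uid X cd s -> forall n, Inv (s n).
Proof.
case=> H0 Hs; elim=> [|n IH]; first by rewrite H0; exact: inv_init.
exact: inv_step IH (Hs n).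
Qed.

Lemma idlt_le (s : state T) a b : idlt uid s a b -> (ksz s a <= ksz s b)%N.
Proof. by rewrite /idlt => /orP[/ltnW|/andP[/eqP -> _]]. Qed.

Lemma phase s c t : (0 < X) -> (0 < cd)%N -> execution e uid X cd s ->
  enters_work s c t -> stays_active cd s c t ->
  [/\ X * (ksz (s t) c)%:R < (#|members (s (t + cd)%N) c|)%:R,
      ksz (s (t + cd).+1) c = #|members (s (t + cd)%N) c| &
      forall m, (t < m <= t + cd)%N -> st (s m) c = Work t].
Proof.
move=> X0 cd0 Ex [Hc Hw Hw1] [Ha1 Ha2].
have I := inv_all Ex; case: Ex => H0 Hs.
have [Hc1 _ Hk1] := L3 (Hs t) Hc Hw.
have Hmid : forall j, (0 < j <= cd)%N -> [/\ cand (s (t + j)%N) c,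
    st (s (t + j)%N) c = Work t & ksz (s (t + j)%N) c = ksz (s t) c].
  elim=> [//|j IH] /andP[_ hj].
  case: j IH hj => [_ _|j IH hj]; first by rewrite addn1.
  have [a b c'] := IH (ltnW hj).
  have hn : (t + j.+1)%N <> (t + cd)%N by move=> E; move: hj; rewrite -(addnI E) ltnn.
  have [a' b' c''] := L1 (Hs (t + j.+1)%N) a b hn.
  by rewrite addnS; split=> //; rewrite c'' c'.
have [a b c'] := Hmid cd (introT andP (conj cd0 (leqnn cd))).
have [d [Hn Hlt Hk]] := L2 (Hs (t + cd)%N) a b erefl Ha2.
have [_ Hi] := I _ _ _ b.
have Hle := idlt_le (Hi _ Hn).
split=> //.
  apply: le_lt_trans Hlt; rewrite -c'; apply: ler_wpM2l; first exact: ltW.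
  by rewrite ler_nat.
move=> m /andP[h1 h2].
have := Hmid (m - t)%N; rewrite subnKC; last exact: ltnW.
case=> //; apply/andP; split; first by rewrite subn_gt0.
by rewrite leq_subLR.
Qed.

End Proofs.

Unset Implicit Arguments.

Theorem lemma4 (T : finType) (e : rel T) (uid : T -> nat) (R : realFieldType)
    (X : R) (countdelay : nat) (s : nat -> state T) (c : T) (t1 t2 : nat) :
  symmetric e -> irreflexive e -> (forall u v, connect e u v) ->
  injective uid -> 1 < X -> (0 < countdelay)%N ->
  execution e uid X countdelay s ->
  enters_work s c t1 -> stays_active countdelay s c t1 ->
  enters_work s c t2 -> stays_active countdelay s c t2 ->
  (t1 < t2)%N -> (forall t, (t1 < t < t2)%N -> ~ enters_work s c t) ->
  X ^+ 2 * (ksz (s t1) c)%:R <= (#|members (s (t2 + countdelay)%N) c|)%:R.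
Proof.
move=> esym _ _ _ X1 cd0 Ex E1 A1 E2 A2 lt12 Hno.
have X0 : 0 < X by apply: lt_trans X1.
have [P1a P1b P1c] := phase esym X0 cd0 Ex E1 A1.
have [P2a P2b P2c] := phase esym X0 cd0 Ex E2 A2.
have Hlt : (t1 + countdelay < t2)%N.
  rewrite ltnNge; apply/negP => h.
  have := P1c t2; rewrite lt12 h => /(_ isT).
  by case: E2 => _ -> _.
case: Ex => H0 Hs.
have Hw : forall j, ((t1 + countdelay).+1 + j <= t2)%N ->
   [/\ cand (s ((t1 + countdelay).+1 + j)%N) c,
       st (s ((t1 + countdelay).+1 + j)%N) c = Wait &
       ksz (s ((t1 + countdelay).+1 + j)%N) c = ksz (s (t1 + countdelay).+1) c].
  elim=> [|j IH] hj; first by rewrite addn0; case: A1.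
  have hj' : ((t1 + countdelay).+1 + j <= t2)%N by move: hj; rewrite addnS => /ltnW.
  have [a b c'] := IH hj'.
  have [a' [b'|b'] c''] := L3 (Hs ((t1 + countdelay).+1 + j)%N) a b.
    by rewrite addnS; split=> //; rewrite c'' c'.
  exfalso; apply: (Hno ((t1 + countdelay).+1 + j)%N).
    apply/andP; split.
      by apply: leq_trans (leq_addr _ _); rewrite ltnS leq_addr.
    by move: hj; rewrite addnS.
  by split=> //; rewrite -addnS.
have hh : ((t1 + countdelay).+1 + (t2 - (t1 + countdelay).+1) <= t2)%N by rewrite subnKC.
have [_ _ Hk2] := Hw _ hh.
rewrite subnKC // in Hk2.
apply: ltW; apply: le_lt_trans P2a.
rewrite expr2 -mulrA; apply: ler_wpM2l; first exact: ltW.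
by rewrite Hk2 P1b; apply: ltW.
Qed.
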